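(* Let $(Q,\cdot)$ be a quasigroup. If $Q$ satisfies $(xy)(zz)=(x(yz))z$ for all $x,y,z\in Q$ (LG2-quasigroup), then $Q$ is a right loop. If $Q$ satisfies $x(x(yz))=((xx)y)z$ for all $x,y,z\in Q$ (LC3-quasigroup), then $Q$ is a left loop.
   Context: A quasigroup is a set $Q$ with a binary operation $\cdot$ (written as juxtaposition) such that for all $a,b\in Q$ each of the equations $ax=b$ and $ya=b$ has a unique solution in $Q$. A quasigroup $Q$ is a left loop if there is $e\in Q$ with $ea=a$ for all $a\in Q$, and a right loop if there is $e\in Q$ with $ae=a$ for all $a\in Q$. *)

(* Defs.v *)
Definition is_quasigroup {Q : Type} (mul : Q -> Q -> Q) : Prop :=
  (forall a b : Q, exists! x : Q, mul a x = b) /\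
  (forall a b : Q, exists! y : Q, mul y a = b).

Definition is_left_loop {Q : Type} (mul : Q -> Q -> Q) : Prop :=
  is_quasigroup mul /\ exists e : Q, forall a : Q, mul e a = a.

Definition is_right_loop {Q : Type} (mul : Q -> Q -> Q) : Prop :=
  is_quasigroup mul /\ exists e : Q, forall a : Q, mul a e = a.

Definition LG2 {Q : Type} (mul : Q -> Q -> Q) : Prop :=
  forall x y z : Q, mul (mul x y) (mul z z) = mul (mul x (mul y z)) z.

Definition LC3 {Q : Type} (mul : Q -> Q -> Q) : Prop :=
  forall x y z : Q, mul x (mul x (mul y z)) = mul (mul (mul x x) y) z.

(* Main.v *)
Require Import Defs.

Lemma lcancel {Q : Type} (mul : Q -> Q -> Q) : is_quasigroup mul ->
  forall a x y, mul a x = mul a y -> x = y.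
Proof.
  intros [H1 _] a x y E. destruct (H1 a (mul a x)) as [w [_ U]].
  rewrite <- (U x eq_refl). apply U. symmetry; exact E.
Qed.

Lemma rcancel {Q : Type} (mul : Q -> Q -> Q) : is_quasigroup mul ->
  forall a x y, mul x a = mul y a -> x = y.
Proof.
  intros [_ H2] a x y E. destruct (H2 a (mul x a)) as [w [_ U]].
  rewrite <- (U x eq_refl). apply U. symmetry; exact E.
Qed.

Theorem mainTheorem5 (Q : Type) (mul : Q -> Q -> Q) :
  inhabited Q -> is_quasigroup mul ->
  (LG2 mul -> is_right_loop mul) /\ (LC3 mul -> is_left_loop mul).
Proof.
  intros [y0] HQ. split.
  - intros HL. split; [exact HQ|].
    destruct HQ as [H1 H2] eqn:E0.
    destruct (H1 y0 y0) as [f [Hf _]].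
    assert (Hff : mul f f = f).
    { apply (lcancel mul HQ (mul y0 y0)).
      rewrite (HL y0 y0 f), Hf. reflexivity. }
    exists f. intros y.
    apply (lcancel mul HQ y0).
    apply (rcancel mul HQ f).
    rewrite <- (HL y0 y f), Hff. reflexivity.
  - intros HC. split; [exact HQ|].
    destruct HQ as [H1 H2] eqn:E0.
    destruct (H2 y0 y0) as [e [He _]].
    exists (mul e e). intros y.
    destruct (H1 y y0) as [z [Hz _]].
    apply (rcancel mul HQ z).
    rewrite <- (HC e y z), Hz, He, He. reflexivity.
Qed.
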